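(* Let $U\in\mathbb{R}^{n\times d}$, let $\mathbf{x}_*\in\mathbb{R}^d$ be $s$-sparse, $\mathbf{e}\in\mathbb{R}^n$ and $\mathbf{y}=U\mathbf{x}_*+\mathbf{e}$. Let $\mathbf{x}_t$ be an iterate of Algorithm 1 with support $\mathcal{S}_t$, and $\mathcal{S}_*$ the support of $\mathbf{x}_*$. If $|\mathcal{S}_t\setminus\mathcal{S}_*|\le s$, $\|\mathbf{x}_t-\mathbf{x}_*\|_2\le\Delta_t$ and $\lambda_t=\|U^\top\mathbf{e}\|_\infty+\frac{\delta_s+\sqrt2\theta_{s,s}}{\sqrt s}\Delta_t$, then \[ \|\mathbf{x}_{t+1}-\mathbf{x}_*\|_2\le(\delta_s+\sqrt2\theta_{s,s}+\delta_{3s})\Delta_t+(1+\sqrt2)\sqrt s\|U^\top\mathbf{e}\|_\infty . \]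
   Context: $U_{\mathcal T}$ is the column submatrix of $U$ indexed by $\mathcal T$. $\delta_k$ is the smallest constant $\ge0$ with $(1-\delta_k)\|\mathbf{v}\|_2^2\le\|U_{\mathcal T}\mathbf{v}\|_2^2\le(1+\delta_k)\|\mathbf{v}\|_2^2$ for all $|\mathcal T|\le k$, $\mathbf{v}\in\mathbb{R}^{|\mathcal T|}$; $\theta_{s,s}$ (with $2s\le d$) is the smallest constant with $|\langle U_{\mathcal T}\mathbf{v},U_{\mathcal T'}\mathbf{v}'\rangle|\le\theta_{s,s}\|\mathbf{v}\|_2\|\mathbf{v}'\|_2$ for all disjoint $\mathcal T,\mathcal T'$ of size at most $s$. Algorithm 1: $\mathbf{x}_1=0$ and $\mathbf{x}_{t+1}=\mathrm{sign}(\widehat{\mathbf{x}}_t)[|\widehat{\mathbf{x}}_t|-\lambda_t]_+$ with $\widehat{\mathbf{x}}_t=\mathbf{x}_t-U^\top(U\mathbf{x}_t-\mathbf{y})$ (componentwise), for parameters $\lambda_t>0$. *)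

(* Defs.v *)
From HB Require Import structures.
From mathcomp Require Import all_boot all_order all_algebra.
From mathcomp Require Import boolp classical_sets reals.
Set Implicit Arguments. Unset Strict Implicit. Unset Printing Implicit Defensive.
Import Order.TTheory GRing.Theory Num.Theory.
Local Open Scope ring_scope.
Local Open Scope classical_set_scope.

Section Defs.
Variable R : realType.

Definition sqnorm m (v : 'cV[R]_m) : R := \sum_i (v i 0) ^+ 2.
Definition norm2 m (v : 'cV[R]_m) : R := Num.sqrt (sqnorm v).
Definition dotp m (a b : 'cV[R]_m) : R := \sum_i a i 0 * b i 0.
Definition norminf m (v : 'cV[R]_m) : R := \big[Num.max/0]_i `|v i 0|.

Definition supp d (x : 'cV[R]_d) : {set 'I_d} := [set i | x i 0 != 0].

(* column submatrix U_T, columns of T taken in increasing order *)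
Definition colT n d (U : 'M[R]_(n, d)) (T : {set 'I_d}) : 'M[R]_(n, #|T|) :=
  colsub (@enum_val _ (pred_of_set T)) U.

Definition rip_delta n d (U : 'M[R]_(n, d)) (k : nat) : R :=
  inf [set c : R | 0 <= c /\
    forall (T : {set 'I_d}), (#|T| <= k)%N -> forall v : 'cV[R]_#|T|,
      (1 - c) * sqnorm v <= sqnorm (colT U T *m v) <= (1 + c) * sqnorm v].

Definition rip_theta n d (U : 'M[R]_(n, d)) (s : nat) : R :=
  inf [set c : R | 0 <= c /\
    forall (T T' : {set 'I_d}), [disjoint (pred_of_set T) & (pred_of_set T')] ->
      (#|T| <= s)%N -> (#|T'| <= s)%N ->
      forall (v : 'cV[R]_#|T|) (v' : 'cV[R]_#|T'|),
        `|dotp (colT U T *m v) (colT U T' *m v')| <= c * norm2 v * norm2 v'].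

Definition ista_step n d (U : 'M[R]_(n, d)) (y : 'cV[R]_n) (lam : R)
    (x : 'cV[R]_d) : 'cV[R]_d :=
  let xh := x - U^T *m (U *m x - y) in
  \col_i (Num.sg (xh i 0) * Num.max (`|xh i 0| - lam) 0).

(* iterates of Algorithm 1: ista U y lam 1 = x_1 = 0,
   ista U y lam t.+1 = x_{t+1} = step with lam t from x_t (t >= 1);
   index 0 is unused and also set to 0 *)
Fixpoint ista n d (U : 'M[R]_(n, d)) (y : 'cV[R]_n) (lam : nat -> R)
    (t : nat) : 'cV[R]_d :=
  match t with
  | 0 => 0
  | t'.+1 => if t' is 0 then 0 else ista_step U y (lam t') (ista U y lam t')
  end.

End Defs.

(* Main.v *)
Require Import Defs.
From HB Require Import structures.
From mathcomp Require Import all_boot all_order all_algebra.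
From mathcomp Require Import boolp classical_sets reals.
From mathcomp Require Import ring lra zify.
Import Order.TTheory GRing.Theory Num.Theory.
Local Open Scope ring_scope.
Set Implicit Arguments. Unset Strict Implicit. Unset Printing Implicit Defensive.

Section Basic.
Variable R : realType.

Lemma sqnorm_ge0 m (v : 'cV[R]_m) : 0 <= sqnorm v.
Proof. by apply: sumr_ge0 => i _; exact: sqr_ge0. Qed.

Lemma norm2_ge0 m (v : 'cV[R]_m) : 0 <= norm2 v.
Proof. exact: sqrtr_ge0. Qed.

Lemma norm2_sq m (v : 'cV[R]_m) : norm2 v ^+ 2 = sqnorm v.
Proof. by rewrite /norm2 sqr_sqrtr // sqnorm_ge0. Qed.

Lemma sqnormE m (v : 'cV[R]_m) : sqnorm v = dotp v v.
Proof. by apply: eq_bigr => i _; rewrite expr2. Qed.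

Lemma dotpC m (a b : 'cV[R]_m) : dotp a b = dotp b a.
Proof. by apply: eq_bigr => i _; rewrite mulrC. Qed.

Lemma dotpDr m (a b c : 'cV[R]_m) : dotp a (b + c) = dotp a b + dotp a c.
Proof. by rewrite /dotp -big_split; apply: eq_bigr => i _; rewrite mxE mulrDr. Qed.

Lemma dotpNr m (a b : 'cV[R]_m) : dotp a (- b) = - dotp a b.
Proof. by rewrite /dotp -sumrN; apply: eq_bigr => i _; rewrite mxE mulrN. Qed.

Lemma dotpBr m (a b c : 'cV[R]_m) : dotp a (b - c) = dotp a b - dotp a c.
Proof. by rewrite dotpDr dotpNr. Qed.

Lemma dotpZr m (a b : 'cV[R]_m) k : dotp a (k *: b) = k * dotp a b.
Proof. by rewrite /dotp mulr_sumr; apply: eq_bigr => i _; rewrite mxE; ring. Qed.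

Lemma dotpZl m (a b : 'cV[R]_m) k : dotp (k *: a) b = k * dotp a b.
Proof. by rewrite dotpC dotpZr dotpC. Qed.

Lemma dotpDl m (a b c : 'cV[R]_m) : dotp (b + c) a = dotp b a + dotp c a.
Proof. by rewrite dotpC dotpDr; congr (_ + _); exact: dotpC. Qed.

Lemma dotpBl m (a b c : 'cV[R]_m) : dotp (b - c) a = dotp b a - dotp c a.
Proof. by rewrite dotpC dotpBr; congr (_ - _); exact: dotpC. Qed.

Lemma dotp_mulmx m p (M : 'M[R]_(m, p)) a b :
  dotp a (M *m b) = dotp (M^T *m a) b.
Proof.
rewrite /dotp.
under eq_bigr do rewrite mxE mulr_sumr.
under [RHS]eq_bigr do rewrite mxE mulr_suml.
rewrite exchange_big /=; apply: eq_bigr => j _; apply: eq_bigr => i _.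
by rewrite mxE; ring.
Qed.

Lemma CS m (a b : 'cV[R]_m) : dotp a b ^+ 2 <= sqnorm a * sqnorm b.
Proof.
have [b0|bpos] := eqVneq (sqnorm b) 0.
  have bi : forall i, b i 0 = 0.
    move=> i; apply/eqP; rewrite -sqrf_eq0; apply/eqP.
    by apply: (psumr_eq0P _ b0) => // j _; exact: sqr_ge0.
  have -> : dotp a b = 0 by apply: big1 => i _; rewrite bi mulr0.
  by rewrite expr0n /= mulr_ge0 // sqnorm_ge0.
have Bgt0 : 0 < sqnorm b by rewrite lt_def bpos sqnorm_ge0.
set A := sqnorm a; set B := sqnorm b; set D := dotp a b.
have key : 0 <= \sum_i (B * a i 0 - D * b i 0) ^+ 2.
  by apply: sumr_ge0 => i _; exact: sqr_ge0.
have eq : \sum_i (B * a i 0 - D * b i 0) ^+ 2 = B * (B * A - D ^+ 2).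
  transitivity (\sum_i (B ^+ 2 * (a i 0 ^+ 2) - (2 * B * D) * (a i 0 * b i 0)
                 + D ^+ 2 * (b i 0 ^+ 2))).
    by apply: eq_bigr => i _; ring.
  rewrite big_split /= big_split /= sumrN -!mulr_sumr.
  have -> : \sum_i a i 0 * b i 0 = D by [].
  have -> : \sum_(i < m) a i 0 ^+ 2 = A by [].
  have -> : \sum_(i < m) b i 0 ^+ 2 = B by [].
  ring.
by rewrite eq pmulr_rge0 // subr_ge0 mulrC in key.
Qed.

Lemma CSabs m (a b : 'cV[R]_m) : `|dotp a b| <= norm2 a * norm2 b.
Proof.
rewrite -ler_sqr ?nnegrE ?mulr_ge0 ?norm2_ge0 //.
by rewrite real_normK ?num_real // exprMn !norm2_sq CS.
Qed.

Lemma CSle m (a b : 'cV[R]_m) : dotp a b <= norm2 a * norm2 b.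
Proof. apply: le_trans (CSabs a b); exact: ler_norm. Qed.

Lemma minkowski m (a b : 'cV[R]_m) : norm2 (a + b) <= norm2 a + norm2 b.
Proof.
rewrite -ler_sqr ?nnegrE ?addr_ge0 ?norm2_ge0 //.
rewrite norm2_sq sqnormE dotpDl !dotpDr (dotpC b a) -!sqnormE -!norm2_sq.
have := CSle a b; nra.
Qed.


Lemma inf_lim (S : set R) (a b k : R) : (S !=set0)%classic -> 0 <= k ->
  (forall c, S c -> a <= b + c * k) -> a <= b + inf S * k.
Proof.
move=> S0 k0 H; apply/ler_addgt0Pr => e e0.
have k1 : 0 < k + 1 by lra.
set f := e / (k + 1).
have f0 : 0 < f by rewrite divr_gt0.
have hf : f * (k + 1) = e by rewrite /f mulfVK // gt_eqF.
have : inf S < inf S + f by rewrite ltrDl.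
case/(inf_lt S0) => c Sc lt.
apply: le_trans (H c Sc) _.
have : c * k <= (inf S + f) * k by rewrite ler_wpM2r // ltW.
nra.
Qed.

Definition frob m p (M : 'M[R]_(m, p)) := \sum_i \sum_j M i j ^+ 2.

Lemma frob_ge0 m p (M : 'M[R]_(m, p)) : 0 <= frob M.
Proof. by apply: sumr_ge0 => i _; apply: sumr_ge0 => j _; exact: sqr_ge0. Qed.

Lemma sqnorm_mul m p (M : 'M[R]_(m, p)) v : sqnorm (M *m v) <= frob M * sqnorm v.
Proof.
rewrite /sqnorm /frob mulr_suml; apply: ler_sum => i _; rewrite mxE.
have -> : \sum_j M i j * v j 0 = dotp (\col_j M i j) v.
  by apply: eq_bigr => j _; rewrite mxE.
have -> : \sum_j M i j ^+ 2 = sqnorm (\col_j M i j).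
  by apply: eq_bigr => j _; rewrite mxE.
exact: CS.
Qed.

End Basic.

Section RIP.
Variables (R : realType) (n d : nat) (U : 'M[R]_(n, d)).

Definition spt (T : {set 'I_d}) (x : 'cV[R]_d) := forall i, i \notin T -> x i 0 = 0.
Definition restr (T : {set 'I_d}) (x : 'cV[R]_d) : 'cV[R]_#|T| :=
  \col_j x (enum_val j) 0.

Lemma sum_spt T (x : 'cV[R]_d) (F : 'I_d -> R) :
  (forall i, x i 0 = 0 -> F i = 0) -> spt T x ->
  \sum_i F i = \sum_(j < #|T|) F (enum_val j).
Proof.
move=> F0 sx; rewrite (bigID (fun i => i \in T)) /= [X in _ + X]big1 ?addr0.
  by rewrite big_enum_val.
by move=> i /sx /F0.
Qed.

Lemma colT_restr T x : spt T x -> colT U T *m restr T x = U *m x.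
Proof.
move=> sx; apply/matrixP => i j; rewrite (ord1 j) !mxE.
rewrite (sum_spt (F := fun k => U i k * x k 0) _ sx); last by move=> k ->; rewrite mulr0.
by apply: eq_bigr => k _; rewrite !mxE.
Qed.

Lemma sqnorm_restr T x : spt T x -> sqnorm (restr T x) = sqnorm x.
Proof.
move=> sx; rewrite /sqnorm (sum_spt (F := fun k => x k 0 ^+ 2) _ sx).
  by apply: eq_bigr => k _; rewrite !mxE.
by move=> k ->; rewrite expr0n.
Qed.

Lemma norm2_restr T x : spt T x -> norm2 (restr T x) = norm2 x.
Proof. by move=> sx; rewrite /norm2 sqnorm_restr. Qed.

Lemma frob_colT T : frob (colT U T) <= frob U.
Proof.
apply: ler_sum => i _.
have -> : \sum_j colT U T i j ^+ 2 = \sum_(l in T) U i l ^+ 2.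
  by rewrite [RHS]big_enum_val; apply: eq_bigr => j _; rewrite mxE.
rewrite [X in _ <= X](bigID (fun l => l \in T)) /= lerDl.
by apply: sumr_ge0 => l _; exact: sqr_ge0.
Qed.

Lemma delta_prop (k : nat) (T : {set 'I_d}) (x : 'cV[R]_d) : (#|T| <= k)%N -> spt T x ->
  (1 - rip_delta U k) * sqnorm x <= sqnorm (U *m x) <= (1 + rip_delta U k) * sqnorm x.
Proof.
move=> Tk sx; rewrite /rip_delta.
set S := (X in inf X).
have S0 : (S !=set0)%classic.
  exists (1 + frob U); split; first by have := frob_ge0 U; lra.
  move=> T' _ v.
  have h1 := sqnorm_mul (colT U T') v.
  have h2 := frob_colT T'.
  have h3 := sqnorm_ge0 v.
  have h4 := sqnorm_ge0 (colT U T' *m v).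
  have h5 := frob_ge0 U.
  apply/andP; split; nra.
have HS : forall c, S c -> (1 - c) * sqnorm x <= sqnorm (U *m x) <= (1 + c) * sqnorm x.
  move=> c [_ Hc]; have := Hc T Tk (restr T x).
  by rewrite colT_restr // sqnorm_restr.
apply/andP; split.
  have : sqnorm x <= sqnorm (U *m x) + inf S * sqnorm x.
    apply: inf_lim => //; first exact: sqnorm_ge0.
    by move=> c /HS /andP[h _]; lra.
  lra.
have : sqnorm (U *m x) <= sqnorm x + inf S * sqnorm x.
  apply: inf_lim => //; first exact: sqnorm_ge0.
  by move=> c /HS /andP[_ h]; lra.
lra.
Qed.

Lemma theta_prop (s : nat) (T T' : {set 'I_d}) (x x' : 'cV[R]_d) : [disjoint T & T'] ->
  (#|T| <= s)%N -> (#|T'| <= s)%N -> spt T x -> spt T' x' ->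
  `|dotp (U *m x) (U *m x')| <= rip_theta U s * norm2 x * norm2 x'.
Proof.
move=> dTT Ts Ts' sx sx'; rewrite /rip_theta.
set S := (X in inf X).
have S0 : (S !=set0)%classic.
  exists (frob U); split; first exact: frob_ge0.
  move=> T1 T1' _ _ _ v v'.
  apply: le_trans (CSabs _ _) _.
  have hb : forall (T2 : {set 'I_d}) (w : 'cV[R]_#|T2|),
      norm2 (colT U T2 *m w) <= Num.sqrt (frob U) * norm2 w.
    move=> T2 w; rewrite /norm2 -sqrtrM ?frob_ge0 // ler_wsqrtr //.
    apply: le_trans (sqnorm_mul _ _) _.
    by rewrite ler_wpM2r ?sqnorm_ge0 ?frob_colT.
  have e1 := hb _ v; have e2 := hb _ v'.
  have := sqr_sqrtr (frob_ge0 U).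
  have := norm2_ge0 (colT U T1 *m v); have := norm2_ge0 (colT U T1' *m v').
  have := norm2_ge0 v; have := norm2_ge0 v'; have := sqrtr_ge0 (frob U).
  nra.
rewrite -mulrA -[inf S * _]add0r; apply: inf_lim => //.
  by rewrite mulr_ge0 ?norm2_ge0.
move=> c [_ Hc]; rewrite add0r mulrA.
have dTT' : [disjoint (pred_of_set T) & (pred_of_set T')]%classic.
  apply/disj_set2P; apply/seteqP; split => i //= [h1 h2].
  by have := disjointFr dTT h1; rewrite -[i \in T']/(pred_of_set T' i) h2.
have := Hc T T' dTT' Ts Ts' (restr T x) (restr T' x').
by rewrite !colT_restr // !norm2_restr.
Qed.

End RIP.

Section Soft.
Variable R : realType.

Lemma soft_diff (l a : R) : 0 <= l ->
  `|Num.sg a * Num.max (`|a| - l) 0 - a| <= l.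
Proof.
move=> l0; case: (ltrgt0P a) => ha.
- rewrite (gtr0_sg ha) mul1r maxEle.
  by case: ifP => h; rewrite ler_norml; apply/andP; split; lra.
- rewrite (ltr0_sg ha) mulN1r maxEle.
  by case: ifP => h; rewrite ler_norml; apply/andP; split; lra.
- by rewrite ha sgr0 mul0r subrr normr0.
Qed.

Lemma soft_le (l a : R) : 0 <= l ->
  `|Num.sg a * Num.max (`|a| - l) 0| <= `|a|.
Proof.
move=> l0; case: (ltrgt0P a) => ha.
- rewrite (gtr0_sg ha) mul1r maxEle.
  by case: ifP => h; rewrite ler_norml; apply/andP; split; lra.
- rewrite (ltr0_sg ha) mulN1r maxEle.
  by case: ifP => h; rewrite ler_norml; apply/andP; split; lra.
- by rewrite ha sgr0 mul0r normr0.
Qed.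

Lemma soft0 (l a : R) : `|a| <= l -> Num.sg a * Num.max (`|a| - l) 0 = 0.
Proof.
move=> h; rewrite maxEle; case: ifP => h'; first by rewrite mulr0.
by exfalso; move/negbT: h'; rewrite -ltNge; lra.
Qed.

Lemma le_norminf m (v : 'cV[R]_m) i : `|v i 0| <= norminf v.
Proof.
rewrite /norminf.
have : i \in index_enum 'I_m by rewrite mem_index_enum.
elim: (index_enum 'I_m) => [//|j r IH]; rewrite inE big_cons.
case/orP => [/eqP ->|/IH h]; rewrite le_max ?lexx //.
by rewrite h orbT.
Qed.

Lemma norminf_ge0 m (v : 'cV[R]_m) : 0 <= norminf v.
Proof. by rewrite /norminf; elim/big_rec: _ => // i x _ hx; rewrite le_max hx orbT. Qed.

End Soft.

Section Mask.
Variables (R : realType) (n d : nat) (U : 'M[R]_(n, d)).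

Definition msk (A : {set 'I_d}) (x : 'cV[R]_d) : 'cV[R]_d :=
  \col_i (if i \in A then x i 0 else 0).

Lemma msk_spt A x : spt A (msk A x).
Proof. by move=> i iA; rewrite mxE (negbTE iA). Qed.

Lemma mskD A x y : msk A (x + y) = msk A x + msk A y.
Proof. by apply/matrixP => i j; rewrite !mxE; case: ifP; rewrite ?addr0. Qed.

Lemma mskB A x y : msk A (x - y) = msk A x - msk A y.
Proof. by apply/matrixP => i j; rewrite !mxE; case: ifP; rewrite ?subr0. Qed.

Lemma dotp_mskr A x y : dotp x (msk A y) = dotp (msk A x) y.
Proof. by apply: eq_bigr => i _; rewrite !mxE; case: ifP; rewrite ?mulr0 ?mul0r. Qed.

Lemma sqnorm_msk A x : sqnorm (msk A x) = dotp (msk A x) x.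
Proof.
rewrite sqnormE; apply: eq_bigr => i _; rewrite !mxE; case: ifP => _ //.
by rewrite !mul0r.
Qed.

Lemma dotp_disj (A B : {set 'I_d}) (x y : 'cV[R]_d) : [disjoint A & B] -> spt A x -> spt B y ->
  dotp x y = 0.
Proof.
move=> dAB sx sy; apply: big1 => i _.
case: (boolP (i \in A)) => iA; last by rewrite sx ?mul0r.
by rewrite sy ?mulr0 // (disjointFr dAB iA).
Qed.

Lemma spt_sub (A B : {set 'I_d}) (x : 'cV[R]_d) : A \subset B -> spt A x -> spt B x.
Proof.
move=> AB sx i iB; apply: sx; apply/negP => /(fintype.subsetP AB) iB'; by rewrite iB' in iB.
Qed.

Lemma delta_ge0 k : 0 <= rip_delta U k.
Proof.
rewrite /rip_delta; apply: lb_le_inf; last by move=> c [].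
exists (1 + frob U); split; first by have := frob_ge0 U; lra.
move=> T' _ v.
have h1 := sqnorm_mul (colT U T') v.
have h2 := frob_colT U T'.
have h3 := sqnorm_ge0 v.
have h4 := sqnorm_ge0 (colT U T' *m v).
have h5 := frob_ge0 U.
apply/andP; split; nra.
Qed.

Lemma theta_ge0 k : 0 <= rip_theta U k.
Proof.
rewrite /rip_theta; apply: lb_le_inf; last by move=> c [].
exists (frob U); split; first exact: frob_ge0.
move=> T1 T1' _ _ _ v v'.
apply: le_trans (CSabs _ _) _.
have hb : forall (T2 : {set 'I_d}) (w : 'cV[R]_#|T2|),
    norm2 (colT U T2 *m w) <= Num.sqrt (frob U) * norm2 w.
  move=> T2 w; rewrite /norm2 -sqrtrM ?frob_ge0 // ler_wsqrtr //.
  apply: le_trans (sqnorm_mul _ _) _.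
  by rewrite ler_wpM2r ?sqnorm_ge0 ?frob_colT.
have e1 := hb _ v; have e2 := hb _ v'.
have := sqr_sqrtr (frob_ge0 U).
have := norm2_ge0 (colT U T1 *m v); have := norm2_ge0 (colT U T1' *m v').
have := norm2_ge0 v; have := norm2_ge0 v'; have := sqrtr_ge0 (frob U).
nra.
Qed.

Lemma polar_aux k (T : {set 'I_d}) (g h : 'cV[R]_d) : (#|T| <= k)%N -> spt T g -> spt T h ->
  `|dotp g h - dotp (U *m g) (U *m h)| <= rip_delta U k * (sqnorm g + sqnorm h) / 2.
Proof.
move=> Tk sg sh.
have sp : spt T (g + h) by move=> i iT; rewrite mxE sg ?sh ?addr0.
have sm : spt T (g - h) by move=> i iT; rewrite !mxE sg ?sh ?subr0.
have /andP[p1 p2] := delta_prop U Tk sp.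
have /andP[m1 m2] := delta_prop U Tk sm.
move: p1 p2 m1 m2; rewrite mulmxDr mulmxBr !sqnormE.
rewrite !dotpBl !dotpBr !dotpDl !dotpDr (dotpC h g) (dotpC (U *m h) (U *m g)).
rewrite -!sqnormE.
have := delta_ge0 k.
set D := dotp g h; set DU := dotp (U *m g) (U *m h).
set G := sqnorm g; set H := sqnorm h.
set GU := sqnorm (U *m g); set HU := sqnorm (U *m h).
set dl := rip_delta U k.
move=> d0 p1 p2 m1 m2.
rewrite ler_norml; apply/andP; split; nra.
Qed.

Lemma polar k (T : {set 'I_d}) (g h : 'cV[R]_d) : (#|T| <= k)%N -> spt T g -> spt T h ->
  `|dotp g h - dotp (U *m g) (U *m h)| <= rip_delta U k * norm2 g * norm2 h.
Proof.
move=> Tk sg sh.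
have d0 := delta_ge0 k.
have ng0 := norm2_ge0 g; have nh0 := norm2_ge0 h.
have zero_case : forall a b : 'cV[R]_d, spt T a -> norm2 a = 0 ->
    dotp a b = 0 /\ dotp (U *m a) (U *m b) = 0.
  move=> a b sa na.
  have /andP[_ hu] := delta_prop U Tk sa.
  have sa0 : sqnorm a = 0 by rewrite -norm2_sq na expr0n.
  have nu0 : norm2 (U *m a) = 0.
    apply/eqP; rewrite sqrtr_eq0; move: hu; rewrite sa0 mulr0 //.
  split; apply/normr0_eq0/eqP; rewrite eq_le normr_ge0 andbT.
    by apply: le_trans (CSabs a b) _; rewrite na mul0r.
  by apply: le_trans (CSabs _ _) _; rewrite nu0 mul0r.
have [g0|gpos] := eqVneq (norm2 g) 0.
  have [-> ->] := zero_case g h sg g0.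
  by rewrite subrr normr0 g0 mulr0 mul0r.
have [h0|hpos] := eqVneq (norm2 h) 0.
  have [e1 e2] := zero_case h g sh h0.
  by rewrite dotpC e1 dotpC e2 subrr normr0 h0 mulr0.
have gp : 0 < norm2 g by rewrite lt_def gpos.
have hp : 0 < norm2 h by rewrite lt_def hpos.
set a2 := norm2 h / norm2 g.
have a2p : 0 < a2 by rewrite divr_gt0.
set a := Num.sqrt a2.
have ap : 0 < a by rewrite sqrtr_gt0.
have aa : a ^+ 2 = a2 by rewrite sqr_sqrtr // ltW.
have sga : spt T (a *: g) by move=> i iT; rewrite mxE sg ?mulr0.
have sha : spt T (a^-1 *: h) by move=> i iT; rewrite mxE sh ?mulr0.
have := polar_aux Tk sga sha.
rewrite -!scalemxAr !sqnormE !dotpZl !dotpZr -!sqnormE -!norm2_sq.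
have -> : a * (a^-1 * dotp g h) = dotp g h by rewrite mulrA mulfV ?gt_eqF // mul1r.
have -> : a * (a^-1 * dotp (U *m g) (U *m h)) = dotp (U *m g) (U *m h).
  by rewrite mulrA mulfV ?gt_eqF // mul1r.
have -> : a * (a * norm2 g ^+ 2) + a^-1 * (a^-1 * norm2 h ^+ 2)
          = 2 * (norm2 g * norm2 h).
  have -> : a * (a * norm2 g ^+ 2) = a ^+ 2 * norm2 g ^+ 2 by rewrite mulrA expr2.
  have -> : a^-1 * (a^-1 * norm2 h ^+ 2) = norm2 h ^+ 2 / a ^+ 2.
    by rewrite mulrA -invrM ?unitfE ?gt_eqF // -expr2 mulrC.
  rewrite aa /a2; field; rewrite !gt_eqF //.
by move=> H; apply: le_trans H _; rewrite -!mulrA; lra.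
Qed.

End Mask.

Lemma disjP' d (A B : {set 'I_d}) : (forall i, i \in A -> i \in B -> False) ->
  [disjoint A & B].
Proof.
move=> H; rewrite -setI_eq0; apply/eqP/setP => i; rewrite !inE.
by apply/negP => /andP[/H h /h].
Qed.

Lemma sqn_abs (R : realType) (x : R) : `|x| ^+ 2 = x ^+ 2.
Proof. by rewrite real_normK ?num_real. Qed.

Lemma three (s : nat) : (3 * s = s + s + s)%N.
Proof. lia. Qed.

Lemma sq_le_abs (R : realType) (x P : R) : `|x| <= P -> x ^+ 2 <= P ^+ 2.
Proof. move=> h; rewrite -sqn_abs; have := normr_ge0 x; nra. Qed.

Lemma sq_lt_abs (R : realType) (x a : R) : 0 <= a -> a < `|x| -> a ^+ 2 < x ^+ 2.
Proof. move=> a0 h; rewrite -[x ^+ 2]sqn_abs; have := normr_ge0 x; nra. Qed.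

Lemma le_sq_div (R : realType) (a b : R) : 0 <= a -> 0 <= b -> a ^+ 2 <= a * b -> a <= b.
Proof.
move=> a0 b0 h; have [->|ap] := eqVneq a 0; first by [].
have ap' : 0 < a by rewrite lt_def ap a0.
by rewrite -(ler_pM2l ap') -expr2.
Qed.

Lemma split_bound (R : realType) (dl th n1 n2 n3 D r : R) :
  0 <= dl -> 0 <= th -> 0 <= n1 -> 0 <= n2 -> 0 <= n3 -> 0 <= D -> 0 <= r ->
  r ^+ 2 = 2 -> n1 ^+ 2 + n2 ^+ 2 + n3 ^+ 2 <= D ^+ 2 ->
  dl * n1 + th * n2 + th * n3 <= (dl + r * th) * D.
Proof.
move=> d0 t0 h1 h2 h3 D0 r0 r2 hs.
have a1 : n1 <= D by nra.
have a2 : (n2 + n3) ^+ 2 <= (r * D) ^+ 2.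
  rewrite exprMn r2; have := sqr_ge0 (n2 - n3); nra.
have a3 : n2 + n3 <= r * D.
  by rewrite -ler_sqr ?nnegrE ?addr_ge0 ?mulr_ge0.
have b1 : dl * n1 <= dl * D by rewrite ler_wpM2l.
have b2 : th * (n2 + n3) <= th * (r * D) by rewrite ler_wpM2l.
nra.
Qed.

Unset Implicit Arguments.

Theorem proposition3 (R : realType) (n d s : nat) (U : 'M[R]_(n, d))
    (xs : 'cV[R]_d) (e : 'cV[R]_n) (y : 'cV[R]_n) (lam : nat -> R)
    (t : nat) (Delta : R) :
  (0 < s)%N -> (2 * s <= d)%N ->
  (#|supp xs| <= s)%N ->
  y = U *m xs + e ->
  (forall k, (1 <= k)%N -> 0 < lam k) ->
  (1 <= t)%N ->
  (#|supp (ista U y lam t) :\: supp xs| <= s)%N ->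
  norm2 (ista U y lam t - xs) <= Delta ->
  lam t = norminf (U^T *m e)
          + (rip_delta U s + Num.sqrt 2 * rip_theta U s)
              / Num.sqrt (s%:R) * Delta ->
  norm2 (ista U y lam t.+1 - xs)
    <= (rip_delta U s + Num.sqrt 2 * rip_theta U s + rip_delta U (3 * s))
         * Delta
       + (1 + Num.sqrt 2) * Num.sqrt (s%:R) * norminf (U^T *m e).
Proof.
move=> s0 _ Sss hy lam0 t1 Sdiff hD hlam.
have hx1 : ista U y lam t.+1 = ista_step U y (lam t) (ista U y lam t).
  by destruct t as [|t']; first by [].
rewrite hx1.
have l0 : 0 < lam t := lam0 t t1.
move: hx1 Sss Sdiff hD hlam l0.
set xt := ista U y lam t; set lm := lam t.
set dl := rip_delta U s; set th := rip_theta U s; set dl3 := rip_delta U (3 * s).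
set z := U^T *m e; set N := norminf z.
set Ss := supp xs; set St := supp xt.
set h := xt - xs.
move=> _ Sss Sdiff hD hlam l0.
set V := U^T *m (U *m h).
set v := h - V.
set w := v + z.
have key : xt - U^T *m (U *m xt - y) = xs + w.
  have -> : U *m xt - y = U *m h - e by rewrite hy /h mulmxBr opprD addrA.
  rewrite mulmxBr -/V -/z /w /v /h.
  apply/matrixP => i j; rewrite !mxE; ring.
set x1 := ista_step U y lm xt.
set E := x1 - xs.
set soft := fun a : R => Num.sg a * Num.max (`|a| - lm) 0.
have Ei : forall i, E i 0 = soft (xs i 0 + w i 0) - xs i 0.
  by move=> i; rewrite /E /x1 /ista_step /= key !mxE.
have lm0 : 0 <= lm by apply: ltW.
have Ea : forall i, `|E i 0 - w i 0| <= lm.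
  move=> i; rewrite Ei.
  have -> : soft (xs i 0 + w i 0) - xs i 0 - w i 0
            = soft (xs i 0 + w i 0) - (xs i 0 + w i 0) by ring.
  exact: soft_diff.
have Eb : forall i, xs i 0 = 0 -> `|E i 0| <= `|w i 0|.
  move=> i x0; rewrite Ei x0 add0r subr0; exact: soft_le.
have Ec : forall i, xs i 0 = 0 -> `|w i 0| <= lm -> E i 0 = 0.
  move=> i x0 hw; rewrite Ei x0 add0r subr0; exact: soft0.
have zN : forall i, `|z i 0| <= N by move=> i; exact: le_norminf.
have N0 : 0 <= N := norminf_ge0 z.
have wE : w = v + z by [].
have vE : v = h - V by [].
have VE : V = U^T *m (U *m h) by [].
have hhE : h = xt - xs by [].
clearbody E w v V h N z.
have inSs : forall i, (i \in Ss) = (xs i 0 != 0) by move=> i; rewrite inE.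
have inSt : forall i, (i \in St) = (xt i 0 != 0) by move=> i; rewrite inE.
set J0 := [set i | (xs i 0 == 0) && (lm < `|w i 0|)].
have inJ0 : forall i, i \in J0 -> xs i 0 = 0 /\ lm < `|w i 0|.
  by move=> i; rewrite inE => /andP[/eqP -> ->].
have inJ0' : forall i, (i \in J0) = (xs i 0 == 0) && (lm < `|w i 0|).
  by move=> i; rewrite inE.
clearbody Ss St J0.
have dl0 : 0 <= dl := delta_ge0 U s.
have dl30 : 0 <= dl3 := delta_ge0 U (3 * s).
have th0 : 0 <= th := theta_ge0 U s.
have D0 : 0 <= Delta := le_trans (norm2_ge0 _) hD.
have sp : 0 < Num.sqrt (s%:R : R) by rewrite sqrtr_gt0 ltr0n.
have sq2 : Num.sqrt (s%:R : R) ^+ 2 = s%:R by rewrite sqr_sqrtr ?ler0n.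
have r2 : Num.sqrt (2 : R) ^+ 2 = 2 by rewrite sqr_sqrtr ?ler0n.
have r20 : 0 <= Num.sqrt (2 : R) := sqrtr_ge0 _.
set c := (dl + Num.sqrt 2 * th) / Num.sqrt (s%:R).
have hlc : lm = N + c * Delta by rewrite hlam.
have hc : Num.sqrt (s%:R) * c = dl + Num.sqrt 2 * th.
  by rewrite /c mulrC mulfVK ?gt_eqF.
have c0 : 0 <= c by rewrite /c; apply: divr_ge0; [nra | exact: ltW].
have hspt0 : forall i, i \notin Ss -> i \notin St -> h i 0 = 0.
  move=> i iS iT; rewrite hhE !mxE.
  move: iS iT; rewrite inSs inSt !negbK => /eqP -> /eqP ->; by rewrite subrr.
have cJ0 : (#|J0| <= s)%N.
  rewrite leqNgt; apply/negP => hJ.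
  have /card_geqP [sq [uq szq subq]] : (s <= #|J0|)%N by exact: ltnW.
  set J := [set i in sq].
  have cJ : #|J| = s by rewrite cardsE; move/card_uniqP: uq => ->.
  have JJ0 : forall i, i \in J -> i \in J0 by move=> i; rewrite inE => /subq.
  clearbody J.
  have Jx : forall i, i \in J -> xs i 0 = 0 by move=> i /JJ0 /inJ0 [].
  have cJs : (#|J| <= s)%N by rewrite cJ.
  set g := msk J v.
  have lowv : forall i, i \in J -> c * Delta < `|v i 0|.
    move=> i /JJ0 /inJ0 [_ hw].
    have wi : w i 0 = v i 0 + z i 0 by rewrite wE mxE.
    have := ler_normD (v i 0) (z i 0); rewrite -wi.
    have := zN i; lra.
  have [i0 iJ0] : exists i0, i0 \in J.
    by apply/card_gt0P; rewrite cJ.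
  have low : (c * Delta) ^+ 2 * s%:R < sqnorm g.
    have -> : sqnorm g = \sum_(i in J) v i 0 ^+ 2.
      rewrite [RHS]big_mkcond /=; apply: eq_bigr => i _; rewrite /g mxE.
      by case: ifP; rewrite ?expr0n.
    rewrite -cJ mulr_natr -sumr_const; apply: ltr_sum.
      by apply/hasP; exists i0 => //; exact: mem_index_enum.
    move=> i iJ; apply: sq_lt_abs (lowv i iJ).
    exact: mulr_ge0.
  set h1 := msk J h; set T3' := (St :\: Ss) :\: J.
  set h2 := msk Ss h; set h3 := msk T3' h.
  have inT3' : forall i, (i \in T3') = (i \notin J) && ((i \notin Ss) && (i \in St)).
    by move=> i; rewrite !inE.
  clearbody T3'.
  have hdec : h = h1 + h2 + h3.
    apply/matrixP => i j; rewrite (ord1 j) /h1 /h2 /h3 !mxE inT3'.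
    case: (boolP (i \in J)) => iJ.
      have iS : (i \in Ss) = false by rewrite inSs Jx ?eqxx.
      by rewrite iS /= !addr0.
    rewrite /=; case: (boolP (i \in Ss)) => iS /=; first by rewrite add0r addr0.
    case: (boolP (i \in St)) => iT /=; first by rewrite !add0r.
    by rewrite hspt0 // !addr0.
  have dJS : [disjoint J & Ss].
    apply: disjP' => i iJ; rewrite inSs Jx ?eqxx //.
  have dJT : [disjoint J & T3'].
    by apply: disjP' => i iJ; rewrite inT3' iJ.
  have dST : [disjoint Ss & T3'].
    by apply: disjP' => i iS; rewrite inT3' iS /= andbF.
  have sg : spt J g by apply: msk_spt.
  have s1 : spt J h1 by apply: msk_spt.
  have s2 : spt Ss h2 by apply: msk_spt.
  have s3 : spt T3' h3 by apply: msk_spt.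
  have cT3' : (#|T3'| <= s)%N.
    apply: leq_trans Sdiff; apply: subset_leq_card; apply/fintype.subsetP => i.
    by rewrite inT3' !inE => /andP[_ ->].
  have e1 : sqnorm g = (dotp g h1 - dotp (U *m g) (U *m h1))
                       - dotp (U *m g) (U *m h2) - dotp (U *m g) (U *m h3).
    rewrite /g sqnorm_msk -/g vE dotpBr VE dotp_mulmx trmxK hdec.
    rewrite !mulmxDr !dotpDr (dotp_disj dJS sg s2) (dotp_disj dJT sg s3).
    rewrite !addr0; lra.
  have P1 := polar U cJs sg s1.
  have P2 := theta_prop U dJS cJs Sss sg s2.
  have P3 := theta_prop U dJT cJs cT3' sg s3.
  rewrite ler_norml in P1; case/andP: P1 => _ P1.
  rewrite ler_norml in P2; case/andP: P2 => P2 _.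
  rewrite ler_norml in P3; case/andP: P3 => P3 _.
  have ng0 := norm2_ge0 g.
  have n10 := norm2_ge0 h1; have n20 := norm2_ge0 h2; have n30 := norm2_ge0 h3.
  have up1 : norm2 g ^+ 2 <= norm2 g * (dl * norm2 h1 + th * norm2 h2 + th * norm2 h3).
    rewrite norm2_sq e1; lra.
  have up2 := le_sq_div ng0 (addr_ge0 (addr_ge0 (mulr_ge0 dl0 n10) (mulr_ge0 th0 n20))
                                     (mulr_ge0 th0 n30)) up1.
  have hsum : norm2 h1 ^+ 2 + norm2 h2 ^+ 2 + norm2 h3 ^+ 2 <= Delta ^+ 2.
    have nh : `|norm2 h| <= Delta by rewrite ger0_norm ?norm2_ge0.
    have := sq_le_abs nh.
    rewrite !norm2_sq sqnormE {1 2}hdec !dotpDl !dotpDr.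
    rewrite (dotp_disj dJS s1 s2) (dotp_disj dJT s1 s3) (dotp_disj dST s2 s3).
    rewrite (dotpC h2 h1) (dotp_disj dJS s1 s2).
    rewrite (dotpC h3 h1) (dotp_disj dJT s1 s3).
    rewrite (dotpC h3 h2) (dotp_disj dST s2 s3).
    rewrite -!sqnormE; lra.
  have up3 := split_bound dl0 th0 n10 n20 n30 D0 r20 r2 hsum.
  have up4 : norm2 g <= (dl + Num.sqrt 2 * th) * Delta by lra.
  have up4' : `|norm2 g| <= (dl + Num.sqrt 2 * th) * Delta by rewrite ger0_norm.
  have up5 := sq_le_abs up4'.
  rewrite norm2_sq in up5.
  have eqc : (c * Delta) ^+ 2 * s%:R = ((dl + Num.sqrt 2 * th) * Delta) ^+ 2.
    by rewrite -sq2 -hc; ring.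
  have : sqnorm g < sqnorm g by lra.
  by rewrite ltxx.
set A' := Ss :|: J0.
set p : 'cV[R]_d := \col_i (if i \in A' then `|w i 0| else 0).
set q : 'cV[R]_d := \col_i (if i \in Ss then lm else 0).
have st1 : norm2 E <= norm2 (p + q).
  rewrite /norm2 ler_wsqrtr //; apply: ler_sum => i _; rewrite !mxE.
  have hE : `|E i 0| <= (if i \in A' then `|w i 0| else 0) + (if i \in Ss then lm else 0).
    case: (boolP (i \in Ss)) => iS.
      rewrite (_ : i \in A' = true); last by rewrite inE iS.
      have := ler_normD (E i 0 - w i 0) (w i 0); rewrite subrK.
      have := Ea i; lra.
    have x0 : xs i 0 = 0 by apply/eqP; rewrite -[_ == _]negbK -inSs.
    rewrite addr0; case: (boolP (lm < `|w i 0|)) => hw.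
      rewrite (_ : i \in A' = true); last by rewrite !inE inJ0' x0 eqxx hw orbT.
      exact: Eb.
    rewrite Ec //; last by rewrite leNgt.
    by rewrite normr0; case: ifP.
  have : 0 <= `|E i 0| := normr_ge0 _.
  move: hE; set P := (_ + _); move=> hE _; exact: (sq_le_abs hE).
have st2 := minkowski p q.
have st3 : norm2 q <= Num.sqrt (s%:R) * lm.
  rewrite /norm2; have -> : sqnorm q = lm ^+ 2 *+ #|Ss|.
    rewrite -sumr_const big_mkcond /=; apply: eq_bigr => i _; rewrite mxE.
    by case: ifP; rewrite ?expr0n.
  rewrite -mulr_natr -[lm in X in _ <= X]ger0_norm // -sqrtr_sqr -sqrtrM ?ler0n //.
  rewrite ler_wsqrtr // mulrC ler_wpM2r ?sqr_ge0 // ler_nat; exact: Sss.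
have st4 : norm2 p = norm2 (msk A' v + msk A' z).
  rewrite -mskD -wE /norm2 /sqnorm; congr (Num.sqrt _); apply: eq_bigr => i _.
  by rewrite !mxE; case: ifP; rewrite ?sqn_abs.
have st5 := minkowski (msk A' v) (msk A' z).
have cA : (#|A'| <= 2 * s)%N.
  apply: leq_trans (leq_card_setU Ss J0).1 _; rewrite mul2n -addnn; exact: leq_add Sss cJ0.
have st6 : norm2 (msk A' z) <= Num.sqrt 2 * Num.sqrt (s%:R) * N.
  have H : sqnorm (msk A' z) <= N ^+ 2 *+ #|A'|.
    rewrite -sumr_const big_mkcond /=; apply: ler_sum => i _; rewrite mxE.
    case: ifP => _; last by rewrite expr0n.
    exact: sq_le_abs (zN i).
  apply: le_trans (ler_wsqrtr H) _.
  have H2 : N ^+ 2 *+ #|A'| <= N ^+ 2 * (2 * s%:R).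
    rewrite -mulr_natr ler_wpM2l ?sqr_ge0 //.
    rewrite (_ : 2 * s%:R = (2 * s)%N%:R :> R) ?ler_nat; [exact: cA | exact: (esym (natrM _ 2 s))].
  apply: le_trans (ler_wsqrtr H2) _.
  rewrite sqrtrM ?sqr_ge0 // sqrtr_sqr ger0_norm // sqrtrM ?ler0n //.
  by rewrite mulrC.
set T3 := Ss :|: (St :\: Ss) :|: J0.
have cT3 : (#|T3| <= 3 * s)%N.
  have e3 : (3 * s = s + s + s)%N by exact: three.
  rewrite e3; apply: leq_trans (leq_card_setU _ _).1 _.
  apply: leq_add cJ0; apply: leq_trans (leq_card_setU _ _).1 _.
  exact: leq_add.
have hspt : forall i, i \notin Ss -> i \notin St -> h i 0 = 0.
  move=> i iS iT; rewrite hhE !mxE.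
  move: iS iT; rewrite inSs inSt !negbK => /eqP -> /eqP ->; by rewrite subrr.
set g := msk A' v.
have st7 : norm2 g <= dl3 * Delta.
  have sg : spt T3 g.
    move=> i iT; rewrite /g mxE ifF //; apply/negP => iA; move: iT; rewrite !inE.
    move: iA; rewrite !inE => /orP[->|->]; by rewrite ?orbT.
  have sh : spt T3 h.
    move=> i; rewrite !inE negb_or negb_or => /andP[/andP[iS]].
    rewrite iS /= => iT _; exact: hspt.
  have P := polar U cT3 sg sh.
  have e1 : sqnorm g = dotp g h - dotp (U *m g) (U *m h).
    by rewrite /g sqnorm_msk -/g vE dotpBr VE dotp_mulmx trmxK.
  have ng0 := norm2_ge0 g; have nh0 := norm2_ge0 h.
  have H : norm2 g ^+ 2 <= dl3 * norm2 g * norm2 h.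
    by rewrite norm2_sq e1; apply: le_trans (ler_norm _) P.
  have H2 : norm2 g <= dl3 * norm2 h.
    have [g0|gp] := eqVneq (norm2 g) 0; first by rewrite g0 mulr_ge0.
    have gp' : 0 < norm2 g by rewrite lt_def gp ng0.
    by rewrite -(ler_pM2l gp') -expr2 mulrA [norm2 g * dl3]mulrC.
  apply: le_trans H2 _; exact: ler_wpM2l.
have hsl : Num.sqrt (s%:R) * lm = Num.sqrt (s%:R) * N + (dl + Num.sqrt 2 * th) * Delta.
  by rewrite hlam mulrDr mulrA hc.
rewrite st4 in st2.
have := norm2_ge0 q.
lra.
Qed.
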